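(* Let $S$ be a (Hausdorff) topological semigroup such that $S\times S$ is countably compact, and let $\lambda$ be an infinite cardinal. Then $S$ does not contain a subsemigroup isomorphic to the semigroup $B_\lambda$ of $\lambda\times\lambda$-matrix units.
   Context: A topological semigroup is a Hausdorff space with a continuous associative multiplication. For a nonzero cardinal $\lambda$, the semigroup of $\lambda\times\lambda$-matrix units is $B_\lambda=(\lambda\times\lambda)\cup\{0\}$ with $(a,b)\cdot(c,d)=(a,d)$ if $b=c$, $(a,b)\cdot(c,d)=0$ if $b\neq c$, and $0$ a zero element. *)

(* Defs.v *)
From Stdlib Require Import Classical ClassicalEpsilon List.

Set Implicit Arguments.

Record Topology (X : Type) := {
  open : (X -> Prop) -> Prop;
  open_full : open (fun _ => True);
  open_inter : forall U V, open U -> open V -> open (fun x => U x /\ V x);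
  open_union : forall F : (X -> Prop) -> Prop,
      (forall U, F U -> open U) -> open (fun x => exists U, F U /\ U x)
}.

Definition hausdorff {X : Type} (T : Topology X) : Prop :=
  forall x y : X, x <> y ->
    exists U V, open T U /\ open T V /\ U x /\ V y /\ (forall z, U z -> V z -> False).

Definition prod_open {X Y : Type} (TX : Topology X) (TY : Topology Y)
  (W : X * Y -> Prop) : Prop :=
  forall p, W p -> exists U V, open TX U /\ open TY V /\ U (fst p) /\ V (snd p) /\
    (forall a b, U a -> V b -> W (a, b)).

Definition countably_compact {X : Type} (op : (X -> Prop) -> Prop) : Prop :=
  forall U : nat -> X -> Prop, (forall n, op (U n)) -> (forall x, exists n, U n x) ->
    exists N, forall x, exists n, n <= N /\ U n x.

Definition topological_semigroup {S : Type} (T : Topology S) (m : S -> S -> S) : Prop :=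
  hausdorff T /\
  (forall x y z, m x (m y z) = m (m x y) z) /\
  (forall W, open T W -> prod_open T T (fun p => W (m (fst p) (snd p)))).

(** Infinite type (a cardinal lambda is represented by a type of that cardinality). *)
Definition finite_type (L : Type) : Prop := exists l : list L, forall x, In x l.
Definition infinite_type (L : Type) : Prop := ~ finite_type L.

(** The semigroup B_L of L x L matrix units: None is the zero. *)
Definition B (L : Type) : Type := option (L * L).

Definition Bmul {L : Type} (u v : B L) : B L :=
  match u, v with
  | Some (a, b), Some (c, d) =>
      if excluded_middle_informative (b = c) then Some (a, d) else None
  | _, _ => None
  end.

(** S contains a subsemigroup isomorphic to B_L: an injective semigroup
    homomorphism B_L -> S (its image is such a subsemigroup). *)
Definition contains_Blambda {S : Type} (m : S -> S -> S) (L : Type) : Prop :=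
  exists f : B L -> S, (forall u v, f u = f v -> u = v) /\
                       (forall u v, f (Bmul u v) = m (f u) (f v)).

(* Main.v *)
Require Import Defs.
From Stdlib Require Import Classical ClassicalEpsilon List Lia PeanoNat Arith.

Lemma pick_ex (L : Type) : infinite_type L -> forall l : list L, exists x, ~ In x l.
Proof.
  intros H l. apply NNPP. intro Hn. apply H. exists l. intro x.
  apply NNPP. intro Hx. apply Hn. exists x. exact Hx.
Qed.

Lemma inj_seq (L : Type) : infinite_type L ->
  exists g : nat -> L, forall n k, n < k -> g n <> g k.
Proof.
  intro H.
  pose (pick := fun l => proj1_sig (constructive_indefinite_description _ (@pick_ex L H l))).
  assert (Hp : forall l, ~ In (pick l) l).
  { intro l. unfold pick. exact (proj2_sig (constructive_indefinite_description _ (@pick_ex L H l))). }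
  pose (h := nat_rect (fun _ => list L) nil (fun _ l => pick l :: l)).
  assert (Hin : forall k n, n < k -> In (pick (h n)) (h k)).
  { induction k as [|k IH]; intros n Hn; [lia|].
    change (h (S k)) with (pick (h k) :: h k).
    destruct (Nat.eq_dec n k) as [->|Hne]; [left; reflexivity|].
    right. apply IH. lia. }
  exists (fun n => pick (h n)). intros n k Hnk Heq.
  apply (Hp (h k)). rewrite <- Heq. apply Hin. exact Hnk.
Qed.

Theorem theorem4 (S : Type) (T : Topology S) (m : S -> S -> S) :
  topological_semigroup T m ->
  countably_compact (prod_open T T) ->
  forall L : Type, infinite_type L -> ~ contains_Blambda m L.
Proof.
  intros [Hhaus [_ Hcont]] Hcc L HL [f [finj fhom]].
  destruct (@inj_seq L HL) as [g Hg].
  set (c := g 0).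
  set (a := fun n => f (Some (c, g n))).
  set (b := fun n => f (Some (g n, c))).
  set (e := f (Some (c, c))).
  set (z0 := f None).
  assert (Hab : forall n, m (a n) (b n) = e).
  { intro n. unfold a, b, e. rewrite <- fhom. simpl.
    destruct (excluded_middle_informative (g n = g n)); [reflexivity|congruence]. }
  assert (Hab0 : forall n k, n < k -> m (a n) (b k) = z0).
  { intros n k Hnk. unfold a, b, z0. rewrite <- fhom. simpl.
    destruct (excluded_middle_informative (g n = g k)); [|reflexivity].
    exfalso. exact (Hg n k Hnk e0). }
  assert (Hne : e <> z0).
  { intro H. apply finj in H. discriminate. }
  set (Uc := fun N (p : S * S) => exists U V, open T U /\ open T V /\ U (fst p) /\ V (snd p) /\
            forall n, N <= n -> ~ (U (a n) /\ V (b n))).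
  destruct (classic (exists p : S * S, forall N, ~ Uc N p)) as [[[x y] Hp]|Hno].
  - assert (Hclu : forall N U V, open T U -> open T V -> U x -> V y ->
               exists n, N <= n /\ U (a n) /\ V (b n)).
    { intros N U V HU HV Ux Vy. apply NNPP. intro Hn. apply (Hp N).
      exists U, V. repeat split; auto. intros n Hn' [Ua Vb]. apply Hn. exists n; auto. }
    assert (Hnb : forall W, open T W -> W (m x y) -> W e /\ W z0).
    { intros W HW Wz. destruct (Hcont W HW (x, y) Wz) as [U [V [HU [HV [Ux [Vy Hw]]]]]].
      simpl in *.
      destruct (Hclu 0 U V HU HV Ux Vy) as [n [_ [Ua Vb]]].
      destruct (Hclu (n + 1) U V HU HV Ux Vy) as [k [Hk [Ua' Vb']]].
      split.
      - rewrite <- (Hab n). apply (Hw _ _ Ua Vb).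
      - rewrite <- (Hab0 n k ltac:(lia)). apply (Hw _ _ Ua Vb'). }
    destruct (classic (m x y = z0)) as [Hz|Hz].
    + destruct (Hhaus (m x y) e ltac:(congruence)) as [W [W' [HW [HW' [Wz [We Hd]]]]]].
      exact (Hd e (proj1 (Hnb W HW Wz)) We).
    + destruct (Hhaus (m x y) z0 Hz) as [W [W' [HW [HW' [Wz [We Hd]]]]]].
      exact (Hd z0 (proj2 (Hnb W HW Wz)) We).
  - assert (Hcov : forall p, exists N, Uc N p).
    { intro p. apply NNPP. intro H. apply Hno. exists p. intros N HN. apply H. exists N. exact HN. }
    assert (Hop : forall N, prod_open T T (Uc N)).
    { intros N p [U [V [HU [HV [Up [Vp Hd]]]]]]. exists U, V. repeat split; auto.
      intros a0 b0 Ua Vb. exists U, V. repeat split; auto. }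
    destruct (Hcc Uc Hop Hcov) as [N HN].
    destruct (HN (a N, b N)) as [n [HnN [U [V [_ [_ [Ua [Vb Hd]]]]]]]].
    exact (Hd N HnN (conj Ua Vb)).
Qed.
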